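(* Uniformly in $0<\alpha<1/2$, for all $u\ge2$, \[\sqrt{Y_1}=u^{1/(2\alpha)}+O\Bigl(\frac1{u^2}\Bigr),\] where $Y_1=Y_1(u,\alpha)$ is the unique positive solution $Y$ of $u=Y^\alpha-Y^{-1-\alpha}$. *)

(* Defs.v *)
From Stdlib Require Export Reals.
Open Scope R_scope.

Definition is_Y1 (u alpha Y : R) : Prop :=
  0 < Y /\ u = Rpower Y alpha - Rpower Y (-1 - alpha).

(* Main.v *)
Require Import Defs.
From Stdlib Require Import Reals Lra.
Open Scope R_scope.

Lemma my_exp_le x y : x <= y -> exp x <= exp y.
Proof. intros [H|H]. left; apply exp_increasing; auto. subst; lra. Qed.

Lemma my_ln_le t : -1 < t -> ln (1 + t) <= t.
Proof.
  intros Ht. pose proof (exp_ineq1_le (ln (1+t))) as H.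
  rewrite exp_ln in H by lra. lra.
Qed.

Theorem lemma14 :
  exists C : R, 0 < C /\
    forall alpha u Y : R,
      0 < alpha < 1/2 -> 2 <= u -> is_Y1 u alpha Y ->
      Rabs (sqrt Y - Rpower u (1 / (2 * alpha))) <= C / u ^ 2.
Proof.
  exists 2. split; [lra|].
  intros p u Y [hp0 hp1] hu [hY hue].
  unfold Rpower in hue |- *.
  rewrite <- (Rpower_sqrt Y hY). unfold Rpower.
  set (L := ln Y) in *.
  set (E := exp (p * L)) in *.
  set (D := exp ((-1 - p) * L)) in *.
  assert (hD : 0 < D) by apply exp_pos.
  assert (hL : 0 < L).
  { destruct (Rlt_or_le 0 L) as [h|h]; auto.
    assert (E <= 1). { unfold E. rewrite <- exp_0. apply my_exp_le. nra. }
    lra. }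
  assert (hEu : u < E) by lra.
  assert (hlnu : ln u < p * L).
  { unfold E in hEu. rewrite <- (ln_exp (p*L)). apply ln_increasing; lra. }
  assert (hdiff : p * L - ln u <= D / u).
  { assert (E = u * (1 + D/u)) by (assert (E = u + D) by lra; rewrite H; field; lra).
    assert (p * L = ln u + ln (1 + D/u)).
    { rewrite <- ln_mult. rewrite <- H. unfold E; rewrite ln_exp; auto. lra.
      assert (0 < D/u) by (apply Rdiv_lt_0_compat; lra). lra. }
    assert (ln (1 + D/u) <= D/u).
    { apply my_ln_le. assert (0 < D/u) by (apply Rdiv_lt_0_compat; lra). lra. }
    lra. }
  set (b := exp (/ 2 * L)).
  set (a := exp (1 / (2 * p) * ln u)).
  assert (hb : 0 < b) by apply exp_pos.
  assert (hab : a = b * exp ((ln u - p * L) / (2 * p))).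
  { unfold a, b. rewrite <- exp_plus. f_equal. field. lra. }
  assert (hz : 1 - exp ((ln u - p * L) / (2 * p)) <= (p * L - ln u) / (2 * p)).
  { pose proof (exp_ineq1_le ((ln u - p * L) / (2 * p))).
    assert ((p * L - ln u) / (2 * p) = - ((ln u - p * L) / (2 * p))) by (field; lra).
    lra. }
  assert (hzpos : exp ((ln u - p * L) / (2 * p)) <= 1).
  { rewrite <- exp_0. apply my_exp_le.
    apply Rmult_le_reg_r with (2*p). lra. unfold Rdiv. rewrite Rmult_assoc, Rinv_l; lra. }
  assert (hbD : b * D * (b * E) = 1).
  { unfold b, D, E. rewrite <- !exp_plus. apply eq_trans with (exp 0); [f_equal; lra | apply exp_0]. }
  assert (hKu : b * D * u * b <= 1).
  { assert (0 < b * D) by (apply Rmult_lt_0_compat; auto). nra. }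
  assert (hln2 : / 2 < ln u).
  { pose proof ln_lt_2. destruct (Req_dec u 2) as [->|hne]; [lra|].
    assert (ln 2 < ln u) by (apply ln_increasing; lra). lra. }
  assert (hbig : / 2 <= 2 * p * b).
  { unfold b. pose proof (exp_ineq1_le (/2 * L)).
    assert (ln u / (2 * p) < / 2 * L).
    { apply Rmult_lt_reg_r with (2*p). lra. field_simplify; lra. }
    assert (/ 2 < 2 * p * (ln u / (2*p))) by (field_simplify; lra).
    nra. }
  set (z := exp ((ln u - p * L) / (2 * p))) in *.
  assert (hsub : b - a <= b * D / (2 * p * u)).
  { rewrite hab.
    assert (b * (1 - z) <= b * ((p * L - ln u) / (2 * p))) by (apply Rmult_le_compat_l; lra).
    assert (b * ((p * L - ln u) / (2 * p)) <= b * (D/u / (2*p))).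
    { apply Rmult_le_compat_l. lra. unfold Rdiv. apply Rmult_le_compat_r. left; apply Rinv_0_lt_compat; lra. exact hdiff. }
    assert (b * (D / u / (2 * p)) = b * D / (2 * p * u)) by (field; lra).
    lra. }
  assert (hz0 : 0 < z) by apply exp_pos.
  rewrite Rabs_pos_eq.
  2:{ rewrite hab. nra. }
  assert (b * D / (2 * p * u) <= 2 / u ^ 2).
  { apply Rmult_le_reg_r with (2 * p * u ^ 2 * b). 
    { apply Rmult_lt_0_compat; [|auto]. apply Rmult_lt_0_compat; [lra|]. nra. }
    replace (b * D / (2 * p * u) * (2 * p * u ^ 2 * b)) with (b * D * u * b) by (field; lra).
    replace (2 / u ^ 2 * (2 * p * u ^ 2 * b)) with (2 * (2 * p * b)) by (field; lra).
    lra. }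
  lra.
Qed.
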